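(* For all $n\ge 3$, $|F_n(321,1324)|=\frac{3}{2}n^2-\frac{13}{2}n+10$.
   Context: A permutation $\pi$ avoids a classical pattern $p\in S_k$ if no subsequence of $\pi$ of length $k$ is order-isomorphic to $p$. A Fishburn permutation is a permutation $\pi=\pi_1\cdots\pi_n$ of $[n]$ for which there are no indices $i<j$ with $\pi_j<\pi_i<\pi_{i+1}$ and $\pi_i=\pi_j+1$. $F_n(\sigma_1,\dots,\sigma_k)$ denotes the set of Fishburn permutations of length $n$ avoiding each of the classical patterns $\sigma_1,\dots,\sigma_k$. *)

(* Defs.v *)
(* Permutations of [n] are represented by 'S_n (permutations
   of 'I_n = {0,..,n-1}); the one-line notation is pi_1 ... pi_n with
   pi_(i+1) = val (s i) + 1.  Shifting all values/indices by one does not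
   affect pattern containment or the Fishburn condition. *)
From mathcomp Require Import all_boot all_order all_algebra all_fingroup.
Set Implicit Arguments. Unset Strict Implicit. Unset Printing Implicit Defensive.

Definition oneline n (s : 'S_n) : seq nat := [seq val (s i) | i <- enum 'I_n].

Definition contains_pat n (s : 'S_n) (p : seq nat) : bool :=
  [exists f : {ffun 'I_(size p) -> 'I_n},
     [forall a : 'I_(size p), forall b : 'I_(size p),
        ((a < b) ==> (f a < f b)) &&
        ((s (f a) < s (f b)) == (nth 0 p a < nth 0 p b))]].

Definition avoids_pat n (s : 'S_n) (p : seq nat) : bool := ~~ contains_pat s p.

Definition fishburn n (s : 'S_n) : bool :=
  let w := oneline s in
  [forall i : 'I_n, forall j : 'I_n,
     ~~ [&& i < j, i.+1 < n, nth 0 w j < nth 0 w i,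
            nth 0 w i < nth 0 w i.+1 & nth 0 w i == (nth 0 w j).+1]].

Definition Fish n (pats : seq (seq nat)) : {set 'S_n} :=
  [set s : 'S_n | fishburn s && all (avoids_pat s) pats].

(* Main.v *)
Require Import Defs.
From mathcomp Require Import all_boot all_order all_algebra all_fingroup.
From mathcomp Require Import zify ring lra.
Set Implicit Arguments. Unset Strict Implicit. Unset Printing Implicit Defensive.

Ltac des_if := repeat (match goal with H : context [if _ then _ else _] |- _ => revert H end);
  repeat (match goal with |- context [if ?b then _ else _] => case: (boolP b) => ? end); intros.

Definition g1 n k i := if i < k then i else if i == k then n.-1 else i.-1.
Definition bb a j := if j == 0 then a else if j <= a then j.-1 else j.
Definition g2 n a k i := if i < k then bb a i else if i == k then n.-1 else bb a i.-1.
Definition g3 n a k i := if i == 0 then a else if i <= k then i.-1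
   else if i <= k + (n.-1 - a) then i - k + a else i - (n - a).

Lemma incr_gap (f : nat -> nat) lo hi :
  (forall i, lo <= i -> i.+1 < hi -> f i < f i.+1) ->
  forall i j, lo <= i -> i <= j -> j < hi -> f i + (j - i) <= f j.
Proof.
move=> H i j Hi; elim: j => [|j IH] Hij Hj; first by move: Hij; rewrite leqn0 => /eqP ->; rewrite addn0.
case: (ltnP j i) => hji.
  have e : i = j.+1 by lia.
  by rewrite e subnn addn0.
have := IH hji (ltnW Hj); have := H j (leq_trans Hi hji) Hj; lia.
Qed.

Section Classify.
Variables (n : nat) (w : nat -> nat).
Hypothesis hn : 3 <= n.
Hypothesis Hr : forall i, i < n -> w i < n.
Hypothesis Hi : forall i j, i < n -> j < n -> w i = w j -> i = j.
Hypothesis Hs : forall v, v < n -> exists2 i, i < n & w i = v.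
Hypothesis H321 : forall i j k, i < j -> j < k -> k < n -> w k < w j -> w j < w i -> False.
Hypothesis H1324 : forall i j k l, i < j -> j < k -> k < l -> l < n ->
  w i < w k -> w k < w j -> w j < w l -> False.
Hypothesis Hf : forall i j, i < j -> j < n -> i.+1 < n -> w j < w i -> w i < w i.+1 ->
  w i = (w j).+1 -> False.

Lemma zero_pos : w 0 = 0 \/ w 1 = 0.
Proof using hn Hr Hi Hs H321 H1324 Hf.
have [p pn wp] : exists2 i, i < n & w i = 0 by apply: Hs; lia.
case: (ltnP p 2) => hp.
  have [e|e] : p = 0 \/ p = 1 by lia.
  - by left; rewrite e in wp.
  - by right; rewrite e in wp.
exfalso.
have ne0 : w 0 <> 0 by move=> h; have := Hi (_ : 0 < n) pn (etrans h (esym wp)); lia.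
have ne1 : w 1 <> 0 by move=> h; have := Hi (_ : 1 < n) pn (etrans h (esym wp)); lia.
case: (ltngtP (w 0) (w 1)) => h.
- have [q qn wq] : exists2 i, i < n & w i = (w 0).-1 by apply: Hs; have := Hr (_ : 0 < n); lia.
  have q0 : q != 0 by apply/eqP => q0; move: wq; rewrite q0; lia.
  apply: (Hf (i:=0) (j:=q)); lia.
- by apply: (H321 (i:=0) (j:=1) (k:=p)); lia.
- by have := Hi (_ : 0 < n) (_ : 1 < n) h; lia.
Qed.

Lemma caseA : w 0 = 0 -> exists2 k, k < n & forall i, i < n -> w i = g1 n k i.
Proof using hn Hr Hi Hs H321 H1324 Hf.
move=> w00.
case: (pickP (fun i : 'I_n => w i != i)) => [i0 /= hi0 | hnone]; last first.
  exists n.-1; first by lia.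
  move=> i iN; have := hnone (Ordinal iN); rewrite /= => /negbFE/eqP ->.
  by rewrite /g1; des_if; lia.
have ex : exists k, (k < n) && (w k != k) by exists i0; rewrite ltn_ord hi0.
case: (ex_minnP ex) => k /andP[kn wk] kmin.
have low : forall i, i < k -> w i = i.
  move=> i ik; have iN : i < n by lia.
  apply/eqP; apply: contraTT ik => h; rewrite -leqNgt; apply: kmin.
  by rewrite h iN.
have k1 : 0 < k by case: k kn wk {kmin low} => //; rewrite w00.
have sinj : forall i v, i < n -> v < k -> w i = v -> i = v.
  move=> i v iN vk h; apply: Hi; [done | lia | by rewrite (low _ vk)].
have ck : k < w k.
  case: (ltngtP (w k) k) => // h; last by move: wk; rewrite h eqxx.
  by have := sinj _ _ kn h (erefl _); lia.
have [q qn wq] := Hs kn.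
have qk : k < q.
  case: (ltngtP q k) => // h; last by subst q; rewrite wq eqxx in wk.
  by have := low _ h; lia.
have q1 : q = k.+1.
  case: (ltnP k.+1 q) => hq; last by lia.
  exfalso.
  have k1n : k.+1 < n by lia.
  have v1 : k < w k.+1.
    case: (ltngtP (w k.+1) k) => h.
    - by have := sinj _ _ k1n h (erefl _); lia.
    - done.
    - by have := Hi k1n qn (etrans h (esym wq)); lia.
  case: (ltngtP (w k.+1) (w k)) => h.
  - by apply: (H321 (i:=k) (j:=k.+1) (k:=q)); lia.
  - have [j jn wj] : exists2 i, i < n & w i = (w k).-1 by apply: Hs; have := Hr kn; lia.
    have kj : k < j.
      case: (ltngtP j k) => h2.
      - by have := low _ h2; lia.
      - done.
      - by move: wj; rewrite h2; lia.
    by apply: (Hf (i:=k) (j:=j)); lia.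
  - by have := Hi k1n kn h; lia.
have cM : w k = n.-1.
  have := Hr kn; case: (ltnP (w k) n.-1) => h1 h2; last by lia.
  exfalso.
  have [r rn wr] : exists2 i, i < n & w i = n.-1 by apply: Hs; lia.
  case: (ltnP k.+1 r) => hr.
  - apply: (H1324 (i:=0) (j:=k) (k:=k.+1) (l:=r)); rewrite -?q1; lia.
  - case: (ltngtP r k) => h3.
    + by have := low _ h3; lia.
    + have : r = k.+1 by lia.
      by move=> rk; move: wr; rewrite rk -q1 wq; lia.
    + by move: wr; rewrite h3; lia.
have hi : forall i, k.+1 < i -> i < n -> w i = i.-1.
  move=> i ki iN.
  have inc : forall j, k.+2 <= j -> j.+1 < n -> w j < w j.+1.
    move=> j hj hj1.
    case: (ltngtP (w j) (w j.+1)) => h //.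
    + have wjM : w j != n.-1 by apply/eqP => e; have := Hi (_ : j < n) kn (etrans e (esym cM)); lia.
      by exfalso; apply: (H321 (i:=k) (j:=j) (k:=j.+1)); try lia; have := Hr (_ : j < n); lia.
    + by have := Hi (_ : j < n) hj1 h; lia.
  have lowb : k.+1 <= w k.+2.
    have k2n : k.+2 < n by lia.
    case: (ltnP (w k.+2) k) => h1; first by have := sinj _ _ k2n h1 (erefl _); lia.
    case: (eqVneq (w k.+2) k) => h2; last by lia.
    by have := Hi k2n qn (etrans h2 (esym wq)); lia.
  have upb : w n.-1 <= n.-2.
    have := Hr (_ : n.-1 < n); case: (eqVneq (w n.-1) n.-1) => e; last by lia.
    by have := Hi (_ : n.-1 < n) kn (etrans e (esym cM)); lia.
  have g1' := incr_gap inc (_ : k.+2 <= k.+2) (_ : k.+2 <= i) iN.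
  have g2' := incr_gap inc (_ : k.+2 <= i) (_ : i <= n.-1) (_ : n.-1 < n).
  have := g1' (leqnn _) ki; have := g2' ki (_ : i <= n.-1) (_ : n.-1 < n); lia.
exists k => // i iN; rewrite /g1.
case: (ltnP i k) => h1; first by rewrite low.
case: (eqVneq i k) => h2; first by rewrite h2.
case: (eqVneq i k.+1) => h3; first by rewrite h3 -q1 wq /=; lia.
rewrite hi //; lia.
Qed.


Lemma caseB : w 1 = 0 ->
  [\/ (forall i, i < n -> w i = g1 n 0 i),
      exists a k, [/\ 1 <= a <= n.-2, 2 <= k <= n.-1 & forall i, i < n -> w i = g2 n a k i]
    | exists a k, [/\ 2 <= a <= n - 3, 1 <= k <= a.-1 & forall i, i < n -> w i = g3 n a k i]].
Proof using hn Hr Hi Hs H321 H1324 Hf.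
move=> w10.
have n0 : 0 < n by lia.
have n1 : 1 < n by lia.
set a := w 0.
have aN : a < n by apply: Hr.
have a1 : 0 < a.
  case: (posnP a) => // h; have := Hi n0 n1 (etrans h (esym w10)); lia.
have na : forall i, 0 < i -> i < n -> w i != a.
  by move=> i i0 iN; apply/eqP => h; have := Hi iN n0 h; lia.
have B1 : forall i j, 0 < i -> i < j -> j < n -> w i < a -> w j < a -> w i < w j.
  move=> i j i0 ij jn hi hj; case: (ltngtP (w i) (w j)) => // h.
  - by exfalso; apply: (H321 (i:=0) (j:=i) (k:=j)).
  - by have := Hi (ltac:(lia) : i < n) jn h; lia.
case: (ltnP a n.-1) => aM; last first.
  apply: Or31 => i iN.
  have sm : forall j, 0 < j -> j < n -> w j < a.
    by move=> j j0 jn; have := Hr jn; have := na _ j0 jn; lia.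
  have inc : forall j, 1 <= j -> j.+1 < n -> w j < w j.+1.
    by move=> j j0 jn; apply: B1 => //; apply: sm; lia.
  case: (posnP i) => i0.
    by rewrite i0 /g1 /=; lia.
  have g1' := incr_gap inc (ltac:(lia) : 1 <= 1) (ltac:(lia) : 1 <= i) iN.
  have g2' := incr_gap inc (ltac:(lia) : 1 <= i) (ltac:(lia) : i <= n.-1) (ltac:(lia) : n.-1 < n).
  have := g1'; have := g2'.
  have := sm n.-1 (ltac:(lia) : 0 < n.-1) (ltac:(lia) : n.-1 < n).
  rewrite /g1; des_if; lia.
have C : forall u i j, w i = u -> i < j -> j < n -> a < w j -> w j < u -> u != n.-1 -> False.
  move=> u; elim/ltn_ind: u => u IH i j wi ij jn aj ju uM.
  have iN : i < n by lia.
  have uN : u < n by rewrite -wi; apply: Hr.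
  have [i' i'n wi'] : exists2 i', i' < n & w i' = u.-1 by apply: Hs; lia.
  case: (ltngtP i' i) => h.
  - case: (eqVneq u.-1 (w j)) => e.
      by have := Hi i'n jn (etrans wi' e); lia.
    by apply: (IH u.-1 _ i' j) => //; lia.
  - have i1 : i.+1 < n by lia.
    have tu : w i.+1 < u.
      case: (ltngtP (w i.+1) u) => // h2.
      - by exfalso; apply: (Hf (i:=i) (j:=i')); lia.
      - by have := Hi i1 iN (etrans h2 (esym wi)); lia.
    have i2 : 1 < i.
      case: (ltnP 1 i) => // hi.
      have [e|e] : i = 0 \/ i = 1 by lia.
      + by move: wi; rewrite e; lia.
      + by move: wi; rewrite e w10; lia.
    have [r rn wr] : exists2 r, r < n & w r = n.-1 by apply: Hs; lia.
    case: (ltngtP r i) => hr.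
    + by apply: (H321 (i:=r) (j:=i) (k:=i.+1)); lia.
    + case: (ltngtP r i.+1) => hr2.
      * lia.
      * have := na _ (ltac:(lia) : 0 < i.+1) i1; case: (ltngtP (w i.+1) a) => // ta _.
        - have t0 : w i.+1 != 0.
            by apply/eqP => e; have := Hi i1 n1 (etrans e (esym w10)); lia.
          by apply: (H1324 (i:=1) (j:=i) (k:=i.+1) (l:=r)); lia.
        - by apply: (H1324 (i:=0) (j:=i) (k:=i.+1) (l:=r)); lia.
      * by move: wr; rewrite hr2; lia.
    + by move: wr; rewrite hr; lia.
  - by move: wi'; rewrite h wi; lia.
have C' : forall i j, i < j -> j < n -> a < w j -> w i != n.-1 -> w i < w j.
  move=> i j ij jn aj iM.
  case: (ltngtP (w i) (w j)) => // h.
  - by exfalso; apply: (C (w i) i j).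
  - by have := Hi (ltac:(lia) : i < n) jn h; lia.
have [r rn wr] : exists2 r, r < n & w r = n.-1 by apply: Hs; lia.
have r2 : 1 < r.
  case: (ltnP 1 r) => // hr.
  have [e|e] : r = 0 \/ r = 1 by lia.
  + by move: wr; rewrite e -/a; lia.
  + by move: wr; rewrite e w10; lia.
have nM : forall i, i < n -> i != r -> w i != n.-1.
  by move=> i iN ir; apply/eqP => e; have := Hi iN rn (etrans e (esym wr)); lia.
case: (boolP [exists i : 'I_n, exists j : 'I_n,
   [&& i < j, a < w i, w i < n.-1 & w j < a]]) => hD; last first.
  apply: Or32.
  have nd : forall i j, i < j -> j < n -> a < w i -> w i < n.-1 -> w j < a -> False.
    move=> i j ij jn h1 h2 h3; move/negP: hD; apply; apply/existsP; exists (Ordinal (ltac:(lia) : i < n)).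
    by apply/existsP; exists (Ordinal jn); rewrite /= ij h1 h2 h3.
  have ord : forall p p', 0 < p -> p < p' -> p' < n -> p != r -> p' != r -> w p < w p'.
    move=> p p' p0 pp p'n pr p'r.
    have pn : p < n by lia.
    have := na _ p0 pn; have := na _ (ltac:(lia) : 0 < p') p'n.
    have := nM _ pn pr; have := nM _ p'n p'r; have := Hr pn; have := Hr p'n.
    move=> h1 h2 h3 h4 h5 h6.
    case: (ltngtP (w p) a) => hp; case: (ltngtP (w p') a) => hp'.
    - by apply: B1.
    - lia.
    - by move: h5; rewrite hp' eqxx.
    - by exfalso; apply: (nd p p'); lia.
    - by apply: C'.
    - by move: h5; rewrite hp' eqxx.
    - by move: h6; rewrite hp eqxx.
    - by move: h6; rewrite hp eqxx.
    - by move: h6; rewrite hp eqxx.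
  pose g i := if i < r then w i else w i.+1.
  have ginc : forall i, 1 <= i -> i.+1 < n.-1 -> g i < g i.+1.
    move=> i i1 iN; rewrite /g; case: (ltnP i.+1 r) => h1.
    - have h2 : i < r by lia.
      rewrite h2; apply: ord; lia.
    - case: (ltnP i r) => h2; apply: ord; lia.
  have gb : forall i, 1 <= i -> i < n.-1 -> g i < n.-1 /\ g i != a.
    move=> i i1 iN; rewrite /g; case: (ltnP i r) => h.
    - have := Hr (ltac:(lia) : i < n); have := nM _ (ltac:(lia) : i < n) (ltac:(lia) : i != r); have := na _ (ltac:(lia) : 0 < i) (ltac:(lia) : i < n).
      move=> h1 h2 h3; split; lia.
    - have := Hr (ltac:(lia) : i.+1 < n); have := nM _ (ltac:(lia) : i.+1 < n) (ltac:(lia) : i.+1 != r); have := na _ (ltac:(lia) : 0 < i.+1) (ltac:(lia) : i.+1 < n).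
      move=> h1 h2 h3; split; lia.
  have g1v : g 1 = 0 by rewrite /g (ltac:(lia) : 1 < r) //.
  have hb : forall i, 1 <= i -> i < n.-1 -> g i = bb a i.
    move=> i i1 iN.
    have lo := incr_gap ginc (leqnn 1) i1 iN.
    have hi := incr_gap ginc i1 (ltac:(lia) : i <= n.-2) (ltac:(lia) : n.-2 < n.-1).
    have := gb _ (ltac:(lia) : 1 <= n.-2) (ltac:(lia) : n.-2 < n.-1).
    have [gi gia] := gb _ i1 iN.
    rewrite /bb; case: (eqVneq i 0) => [|_]; first by lia.
    case: (leqP i a) => ia.
    - case: (eqVneq (g i) i) => e; last by lia.
      have := incr_gap ginc i1 ia (ltac:(lia) : a < n.-1).
      have := incr_gap ginc (ltac:(lia) : 1 <= a) (ltac:(lia) : a <= n.-2) (ltac:(lia) : n.-2 < n.-1).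
      have [_ gaa] := gb a (ltac:(lia) : 1 <= a) (ltac:(lia) : a < n.-1).
      lia.
    - case: (eqVneq (g i) i.-1) => e; last by lia.
      have := incr_gap ginc (ltac:(lia) : 1 <= a.+1) ia iN.
      have := incr_gap ginc (leqnn 1) (ltac:(lia) : 1 <= a.+1) (ltac:(lia) : a.+1 < n.-1).
      have [_ gaa] := gb a.+1 (ltac:(lia) : 1 <= a.+1) (ltac:(lia) : a.+1 < n.-1).
      lia.
  exists a, r; split; [lia | lia | move=> i iN].
  rewrite /g2; case: (ltnP i r) => h1.
  - case: (posnP i) => i0; first by rewrite i0.
    have := hb i i0 (ltac:(lia) : i < n.-1); rewrite /g h1; lia.
  - case: (eqVneq i r) => h2; first by rewrite h2.
    have := hb i.-1 (ltac:(lia) : 1 <= i.-1) (ltac:(lia) : i.-1 < n.-1); rewrite /g.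
    rewrite (_ : (i.-1 < r) = false); last by lia.
    rewrite (_ : i.-1.+1 = i); last by lia.
    lia.
apply: Or33.
case/existsP: hD => x0 /existsP [y0 /and4P [ij0 ai0 i0M j0a]].
have x0n : x0 < n := ltn_ord x0.
have y0n : y0 < n := ltn_ord y0.
have [p1 p1n wp1] : exists2 p, p < n & w p = a.+1 by apply: Hs; lia.
have p12 : 1 < p1.
  case: (ltnP 1 p1) => // hr.
  have [e|e] : p1 = 0 \/ p1 = 1 by lia.
  + by move: wp1; rewrite e -/a; lia.
  + by move: wp1; rewrite e w10; lia.
have p1x0 : p1 <= x0.
  case: (leqP p1 x0) => // h.
  case: (eqVneq (w x0) a.+1) => e.
    by have := Hi x0n p1n (etrans e (esym wp1)); lia.
  by have := C' x0 p1 h p1n (ltac:(lia) : a < w p1) (ltac:(lia) : w x0 != n.-1); lia.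
have D2 : forall j l, p1 < j -> j < l -> l < n -> w j < a -> w l < a.
  move=> j l pj jl ln ja.
  have := na _ (ltac:(lia) : 0 < l) ln; case: (ltngtP (w l) a) => // al _.
  have la1 : w l != a.+1.
    by apply/eqP => e; have := Hi ln p1n (etrans e (esym wp1)); lia.
  have y0' : w j != 0.
    by apply/eqP => e; have := Hi (ltac:(lia) : j < n) n1 (etrans e (esym w10)); lia.
  by exfalso; apply: (H1324 (i:=1) (j:=p1) (k:=j) (l:=l)); lia.
have ex : exists e, [&& p1 < e, e < n & w e < a] by exists y0; rewrite j0a y0n andbT; lia.
case: (ex_minnP ex) => e /and3P [p1e en ea] emin.
have blockL : forall i, p1 <= i -> i < e -> a < w i.
  move=> i pi ie; case: (eqVneq i p1) => [->|ip]; first by lia.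
  have iN : i < n by lia.
  have := na _ (ltac:(lia) : 0 < i) iN.
  case: (ltngtP (w i) a) => // h _.
  by have := emin i (ltac:(rewrite h iN andbT; lia)); lia.
have smallR : forall i, e <= i -> i < n -> w i < a.
  move=> i ei iN; case: (eqVneq i e) => [->|ie] //; apply: (D2 e i); lia.
have smallL : forall i, 0 < i -> i < p1 -> w i < a.
  move=> i i0 ip; have iN : i < n by lia.
  have := na _ i0 iN; case: (ltngtP (w i) a) => // h _.
  have ia1 : w i != a.+1.
    by apply/eqP => e'; have := Hi iN p1n (etrans e' (esym wp1)); lia.
  case: (eqVneq (w i) n.-1) => hM.
  - by exfalso; apply: (H321 (i:=i) (j:=p1) (k:=e)); lia.
  - by have := C' i p1 ip p1n (ltac:(lia) : a < w p1) hM; lia.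
have blockinc : forall i, p1 <= i -> i.+1 < e -> w i < w i.+1.
  move=> i pi ie.
  have iM : w i != n.-1.
    apply/eqP => hM.
    have ir : i = r by apply: Hi; [lia | done | by rewrite hM wr].
    have := blockL i.+1 (ltac:(lia)) ie.
    have := nM i.+1 (ltac:(lia)) (ltac:(lia)).
    have := Hr (ltac:(lia) : i.+1 < n).
    by move=> h1 h2 h3; apply: (H321 (i:=i) (j:=i.+1) (k:=e)); lia.
  by apply: C' => //; [lia | apply: blockL; lia].
have re : r = e.-1.
  have := Hr rn.
  case: (posnP r) => r0; first by move: wr; rewrite r0 -/a; lia.
  case: (ltnP r p1) => rp; first by have := smallL r r0 rp; lia.
  case: (leqP e r) => er; first by have := smallR r er rn; lia.
  case: (ltnP r.+1 e) => rr; last by lia.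
  move=> _; have := blockinc r rp rr; have := blockL r.+1 (ltac:(lia)) rr.
  have := nM r.+1 (ltac:(lia)) (ltac:(lia)); have := Hr (ltac:(lia) : r.+1 < n).
  move=> h1 h2 h3 h4.
  by exfalso; apply: (H321 (i:=r) (j:=r.+1) (k:=e)); lia.
have blk := incr_gap blockinc (leqnn p1) (ltac:(lia) : p1 <= e.-1) (ltac:(lia) : e.-1 < e).
rewrite -re wr wp1 in blk.
pose h i := if i < p1 then w i else w (i + (e - p1)).
have hpos : forall i, 0 < i -> i < p1 + (n - e) -> 0 < (if i < p1 then i else i + (e - p1)) < n.
  move=> i i0 iN; des_if; lia.
have hsm : forall i, 0 < i -> i < p1 + (n - e) -> h i < a.
  move=> i i0 iN; rewrite /h; case: (ltnP i p1) => hh.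
  - by apply: smallL.
  - by apply: smallR; lia.
have hinc : forall i, 1 <= i -> i.+1 < p1 + (n - e) -> h i < h i.+1.
  move=> i i1 iN.
  have := hsm i i1 (ltac:(lia)); have := hsm i.+1 (ltac:(lia)) iN.
  rewrite /h; case: (ltnP i.+1 p1) => hh.
  - rewrite (_ : i < p1); last by lia.
    move=> ha hb; apply: B1 => //; lia.
  - case: (ltnP i p1) => hh2 ha hb; apply: B1 => //; lia.
have h1 : h 1 = 0 by rewrite /h (_ : 1 < p1).
have hl := incr_gap hinc (leqnn 1) (ltac:(lia) : 1 <= (p1 + (n - e)).-1) (ltac:(lia) : (p1 + (n - e)).-1 < p1 + (n - e)).
have := hsm (p1 + (n - e)).-1 (ltac:(lia)) (ltac:(lia)).
move=> hla.
have hval : forall i, 0 < i -> i < p1 + (n - e) -> h i = i.-1.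
  move=> i i0 iN.
  have := incr_gap hinc (leqnn 1) (ltac:(lia) : 1 <= i) iN.
  have := incr_gap hinc (ltac:(lia) : 1 <= i) (ltac:(lia) : i <= (p1 + (n - e)).-1) (ltac:(lia) : (p1 + (n - e)).-1 < p1 + (n - e)).
  lia.
have bval : forall i, p1 <= i -> i < e -> w i = a.+1 + (i - p1).
  move=> i pi ie.
  have := incr_gap blockinc (leqnn p1) pi ie.
  have := incr_gap blockinc pi (ltac:(lia) : i <= e.-1) (ltac:(lia) : e.-1 < e).
  rewrite -re wr wp1; lia.
exists a, p1.-1; split; [lia | lia | move=> i iN].
rewrite /g3.
case: (posnP i) => i0; first by rewrite i0.
case: (ltnP i p1) => hp.
- rewrite (_ : i <= p1.-1); last by lia.
  by have := hval i i0 (ltac:(lia)); rewrite /h hp.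
- rewrite (_ : (i <= p1.-1) = false); last by lia.
  case: (ltnP i e) => he.
  + rewrite (_ : i <= p1.-1 + (n.-1 - a)); last by lia.
    rewrite bval //; lia.
  + rewrite (_ : (i <= p1.-1 + (n.-1 - a)) = false); last by lia.
    have := hval (i - (e - p1)) (ltac:(lia)) (ltac:(lia)).
    rewrite /h (_ : (i - (e - p1) < p1) = false); last by lia.
    rewrite (_ : i - (e - p1) + (e - p1) = i); last by lia.
    lia.
Qed.

End Classify.
Section F1.
Variables n k : nat.
Hypothesis hk : k < n.
Lemma g1_spec x : let v := g1 n k x in
  (x < k /\ v = x) \/ (x = k /\ v + 1 = n) \/ (k < x /\ v + 1 = x).
Proof. rewrite /g1; des_if; lia. Qed.
Lemma g1_range : forall y1, y1 < n -> (g1 n k y1) < n.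
Proof.
move=> y1.
have := g1_spec (y1).
move: (g1 n k y1) => v0 /= *.
lia.
Qed.
Lemma g1_inj : forall y1 y2, y1 < n -> y2 < n -> (g1 n k y1) = (g1 n k y2) -> y1 = y2.
Proof.
move=> y1 y2.
have := g1_spec (y1).
have := g1_spec (y2).
move: (g1 n k y1) (g1 n k y2) => v0 v1 /= *.
lia.
Qed.
Lemma g1_321 : forall y1 y2 y3, y1 < y2 -> y2 < y3 -> y3 < n -> (g1 n k y3) < (g1 n k y2) -> (g1 n k y2) < (g1 n k y1) -> False.
Proof.
move=> y1 y2 y3.
have := g1_spec (y1).
have := g1_spec (y2).
have := g1_spec (y3).
move: (g1 n k y1) (g1 n k y2) (g1 n k y3) => v0 v1 v2 /= *.
lia.
Qed.
Lemma g1_1324 : forall y1 y2 y3 y4, y1 < y2 -> y2 < y3 -> y3 < y4 -> y4 < n -> (g1 n k y1) < (g1 n k y3) -> (g1 n k y3) < (g1 n k y2) -> (g1 n k y2) < (g1 n k y4) -> False.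
Proof.
move=> y1 y2 y3 y4.
have := g1_spec (y1).
have := g1_spec (y2).
have := g1_spec (y3).
have := g1_spec (y4).
move: (g1 n k y1) (g1 n k y2) (g1 n k y3) (g1 n k y4) => v0 v1 v2 v3 /= *.
lia.
Qed.
Lemma g1_fish : forall y1 y2, y1 < y2 -> y2 < n -> y1.+1 < n -> (g1 n k y2) < (g1 n k y1) -> (g1 n k y1) < (g1 n k y1.+1) -> (g1 n k y1) = ((g1 n k y2)).+1 -> False.
Proof.
move=> y1 y2.
have := g1_spec (y1).
have := g1_spec (y2).
have := g1_spec (y1.+1).
move: (g1 n k y1) (g1 n k y2) (g1 n k y1.+1) => v0 v1 v2 /= *.
lia.
Qed.
End F1.

Section F2.
Variables n a k : nat.
Hypothesis ha : 1 <= a <= n.-2.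
Hypothesis hk : 2 <= k <= n.-1.
Lemma g2_spec x : let v := g2 n a k x in
  (x = 0 /\ v = a) \/ (1 <= x /\ x < k /\ x <= a /\ v + 1 = x) \/ (x < k /\ a < x /\ v = x)
  \/ (x = k /\ v + 1 = n) \/ (k < x /\ x <= a + 1 /\ v + 2 = x) \/ (k < x /\ a + 1 < x /\ v + 1 = x).
Proof. rewrite /g2 /bb; des_if; lia. Qed.
Lemma g2_range : forall y1, y1 < n -> (g2 n a k y1) < n.
Proof.
move=> y1.
have := g2_spec (y1).
move: (g2 n a k y1) => v0 /= *.
lia.
Qed.
Lemma g2_inj : forall y1 y2, y1 < n -> y2 < n -> (g2 n a k y1) = (g2 n a k y2) -> y1 = y2.
Proof.
move=> y1 y2.
have := g2_spec (y1).
have := g2_spec (y2).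
move: (g2 n a k y1) (g2 n a k y2) => v0 v1 /= *.
lia.
Qed.
Lemma g2_321 : forall y1 y2 y3, y1 < y2 -> y2 < y3 -> y3 < n -> (g2 n a k y3) < (g2 n a k y2) -> (g2 n a k y2) < (g2 n a k y1) -> False.
Proof.
move=> y1 y2 y3.
have := g2_spec (y1).
have := g2_spec (y2).
have := g2_spec (y3).
move: (g2 n a k y1) (g2 n a k y2) (g2 n a k y3) => v0 v1 v2 /= *.
lia.
Qed.
Lemma g2_1324 : forall y1 y2 y3 y4, y1 < y2 -> y2 < y3 -> y3 < y4 -> y4 < n -> (g2 n a k y1) < (g2 n a k y3) -> (g2 n a k y3) < (g2 n a k y2) -> (g2 n a k y2) < (g2 n a k y4) -> False.
Proof.
move=> y1 y2 y3 y4.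
have := g2_spec (y1).
have := g2_spec (y2).
have := g2_spec (y3).
have := g2_spec (y4).
move: (g2 n a k y1) (g2 n a k y2) (g2 n a k y3) (g2 n a k y4) => v0 v1 v2 v3 /= *.
lia.
Qed.
Lemma g2_fish : forall y1 y2, y1 < y2 -> y2 < n -> y1.+1 < n -> (g2 n a k y2) < (g2 n a k y1) -> (g2 n a k y1) < (g2 n a k y1.+1) -> (g2 n a k y1) = ((g2 n a k y2)).+1 -> False.
Proof.
move=> y1 y2.
have := g2_spec (y1).
have := g2_spec (y2).
have := g2_spec (y1.+1).
move: (g2 n a k y1) (g2 n a k y2) (g2 n a k y1.+1) => v0 v1 v2 /= *.
lia.
Qed.
End F2.

Section F3.
Variables n a k : nat.
Hypothesis ha : 2 <= a <= n - 3.
Hypothesis hk : 1 <= k <= a.-1.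
Lemma g3_spec x : let v := g3 n a k x in
  (x = 0 /\ v = a) \/ (1 <= x /\ x <= k /\ v + 1 = x) \/ (k < x /\ x + a <= k + n - 1 /\ v + k = x + a)
  \/ (k + n - 1 < x + a /\ v + n = x + a).
Proof. rewrite /g3; des_if; lia. Qed.
Lemma g3_range : forall y1, y1 < n -> (g3 n a k y1) < n.
Proof.
move=> y1.
have := g3_spec (y1).
move: (g3 n a k y1) => v0 /= *.
lia.
Qed.
Lemma g3_inj : forall y1 y2, y1 < n -> y2 < n -> (g3 n a k y1) = (g3 n a k y2) -> y1 = y2.
Proof.
move=> y1 y2.
have := g3_spec (y1).
have := g3_spec (y2).
move: (g3 n a k y1) (g3 n a k y2) => v0 v1 /= *.
lia.
Qed.
Lemma g3_321 : forall y1 y2 y3, y1 < y2 -> y2 < y3 -> y3 < n -> (g3 n a k y3) < (g3 n a k y2) -> (g3 n a k y2) < (g3 n a k y1) -> False.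
Proof.
move=> y1 y2 y3.
have := g3_spec (y1).
have := g3_spec (y2).
have := g3_spec (y3).
move: (g3 n a k y1) (g3 n a k y2) (g3 n a k y3) => v0 v1 v2 /= *.
lia.
Qed.
Lemma g3_1324 : forall y1 y2 y3 y4, y1 < y2 -> y2 < y3 -> y3 < y4 -> y4 < n -> (g3 n a k y1) < (g3 n a k y3) -> (g3 n a k y3) < (g3 n a k y2) -> (g3 n a k y2) < (g3 n a k y4) -> False.
Proof.
move=> y1 y2 y3 y4.
have := g3_spec (y1).
have := g3_spec (y2).
have := g3_spec (y3).
have := g3_spec (y4).
move: (g3 n a k y1) (g3 n a k y2) (g3 n a k y3) (g3 n a k y4) => v0 v1 v2 v3 /= *.
lia.
Qed.
Lemma g3_fish : forall y1 y2, y1 < y2 -> y2 < n -> y1.+1 < n -> (g3 n a k y2) < (g3 n a k y1) -> (g3 n a k y1) < (g3 n a k y1.+1) -> (g3 n a k y1) = ((g3 n a k y2)).+1 -> False.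
Proof.
move=> y1 y2.
have := g3_spec (y1).
have := g3_spec (y2).
have := g3_spec (y1.+1).
move: (g3 n a k y1) (g3 n a k y2) (g3 n a k y1.+1) => v0 v1 v2 /= *.
lia.
Qed.
End F3.

Section Trans.
Variables (n : nat) (s : 'S_n).
Local Notation w := (nth 0 (oneline s)).

Lemma size_oneline : size (oneline s) = n.
Proof. by rewrite /oneline size_map size_enum_ord. Qed.

Lemma wE i (hi : i < n) : w i = s (Ordinal hi).
Proof.
rewrite /oneline (nth_map (Ordinal hi)) ?size_enum_ord //.
by congr (nat_of_ord (s _)); apply/val_inj => /=; exact: nth_enum_ord.
Qed.

Lemma wEo (i : 'I_n) : w i = s i.
Proof. by case: i => i hi; rewrite wE. Qed.

Lemma pat_pair p (f : {ffun 'I_(size p) -> 'I_n})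
  (H : [forall a : 'I_(size p), forall b : 'I_(size p),
        ((a < b) ==> (f a < f b)) &&
        ((s (f a) < s (f b)) == (nth 0 p a < nth 0 p b))]) (a b : 'I_(size p)) :
  (a < b -> f a < f b) /\ ((s (f a) < s (f b)) = (nth 0 p a < nth 0 p b)).
Proof.
move/forallP: H => /(_ a) /forallP /(_ b) /andP [/implyP h1 /eqP h2]; by split.
Qed.

Lemma c321 : contains_pat s [:: 3; 2; 1] <->
  exists i j k, [/\ i < j, j < k, k < n, w k < w j & w j < w i].
Proof.
split.
- case/existsP => f H.
  pose o0 : 'I_3 := @Ordinal 3 0 isT.
  pose o1 : 'I_3 := @Ordinal 3 1 isT.
  pose o2 : 'I_3 := @Ordinal 3 2 isT.
  have [h01 e01] := pat_pair H o0 o1.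
  have [h12 e12] := pat_pair H o1 o2.
  exists (f o0), (f o1), (f o2); rewrite !wEo; split.
  + exact: h01.
  + exact: h12.
  + exact: ltn_ord.
  + by move: e12 => /= /negbT; rewrite -leqNgt ltn_neqAle => ->; rewrite andbT;
       apply/negP => /eqP/val_inj/perm_inj/(congr1 val) => e; have := h12 isT; rewrite e ltnn.
  + by move: e01 => /= /negbT; rewrite -leqNgt ltn_neqAle => ->; rewrite andbT;
       apply/negP => /eqP/val_inj/perm_inj/(congr1 val) => e; have := h01 isT; rewrite e ltnn.
- case=> i [j [k [ij jk kn h1 h2]]].
  have hi : i < n by lia.
  have hj : j < n by lia.
  pose I := Ordinal hi; pose J := Ordinal hj; pose K := Ordinal kn.
  apply/existsP; exists [ffun a : 'I_3 => nth I [:: I; J; K] a].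
  move: h1 h2; rewrite (wE hi) (wE hj) (wE kn) => h1 h2.
  apply/forallP => a; apply/forallP => b; rewrite !ffunE.
  case: a => [[|[|[|//]]] ha]; case: b => [[|[|[|//]]] hb] /=.
  all: rewrite /I /J /K /=; lia.
Qed.

Lemma c1324 : contains_pat s [:: 1; 3; 2; 4] <->
  exists i j k l, [/\ i < j, j < k, k < l, l < n &
     [/\ w i < w k, w k < w j & w j < w l]].
Proof.
split.
- case/existsP => f H.
  pose o0 : 'I_4 := @Ordinal 4 0 isT.
  pose o1 : 'I_4 := @Ordinal 4 1 isT.
  pose o2 : 'I_4 := @Ordinal 4 2 isT.
  pose o3 : 'I_4 := @Ordinal 4 3 isT.
  have [h01 _] := pat_pair H o0 o1.
  have [h12 _] := pat_pair H o1 o2.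
  have [h23 _] := pat_pair H o2 o3.
  have [_ e02] := pat_pair H o0 o2.
  have [_ e21] := pat_pair H o2 o1.
  have [_ e13] := pat_pair H o1 o3.
  exists (f o0), (f o1), (f o2), (f o3); rewrite !wEo; split.
  + exact: h01.
  + exact: h12.
  + exact: h23.
  + exact: ltn_ord.
  + by rewrite e02 e21 e13.
- case=> i [j [k [l [ij jk kl ln [h1 h2 h3]]]]].
  have hi : i < n by lia.
  have hj : j < n by lia.
  have hk : k < n by lia.
  pose I := Ordinal hi; pose J := Ordinal hj; pose K := Ordinal hk; pose L := Ordinal ln.
  apply/existsP; exists [ffun a : 'I_4 => nth I [:: I; J; K; L] a].
  move: h1 h2 h3; rewrite (wE hi) (wE hj) (wE hk) (wE ln) => h1 h2 h3.
  apply/forallP => a; apply/forallP => b; rewrite !ffunE.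
  case: a => [[|[|[|[|//]]]] ha]; case: b => [[|[|[|[|//]]]] hb] /=.
  all: rewrite /I /J /K /L /=; lia.
Qed.

Lemma cfish : fishburn s <-> forall i j, i < j -> j < n -> i.+1 < n ->
  w j < w i -> w i < w i.+1 -> w i = (w j).+1 -> False.
Proof.
split.
- move=> H i j ij jn i1 a b c; have iN : i < n by lia.
  move/forallP: H => /(_ (Ordinal iN)) /forallP /(_ (Ordinal jn)) /=.
  by rewrite ij i1 a b c eqxx.
- move=> H; apply/forallP => i; apply/forallP => j; apply/negP.
  case/and5P => a b c d /eqP e; exact: (H i j a (ltn_ord j) b c d e).
Qed.
End Trans.
Lemma mk_eq n (f g : nat -> nat) : mkseq f n = mkseq g n -> forall i, i < n -> f i = g i.
Proof. by move=> e i hi; rewrite -(nth_mkseq 0 f hi) -(nth_mkseq 0 g hi) e. Qed.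

Lemma uniq_flatten_map (S T : eqType) (F : S -> seq T) (s : seq S) :
  uniq s -> (forall a, a \in s -> uniq (F a)) ->
  (forall a b x, a \in s -> b \in s -> x \in F a -> x \in F b -> a = b) ->
  uniq (flatten [seq F a | a <- s]).
Proof.
elim: s => //= a s IH /andP [an us] Hu Hd.
rewrite cat_uniq Hu ?mem_head //= IH //; last first.
- by move=> b c x bs cs xb xc; apply: (Hd b c x); rewrite ?inE ?bs ?cs ?orbT.
- by move=> b bs; apply: Hu; rewrite inE bs orbT.
rewrite andbT; apply/hasPn => x /flatten_mapP [b bs xb]; apply/negP => xa.
have := Hd a b x (mem_head _ _) (_ : b \in a :: s) xa xb.
by move=> /(_ ltac:(by rewrite inE bs orbT)) ab; move: an; rewrite ab bs.
Qed.

Definition E1 n := [seq mkseq (g1 n k) n | k <- iota 0 n].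
Definition E2 n := flatten [seq [seq mkseq (g2 n a k) n | k <- iota 2 n.-2] | a <- iota 1 n.-2].
Definition E3 n := flatten [seq [seq mkseq (g3 n a k) n | k <- iota 1 a.-1] | a <- iota 2 (n - 4)].
Definition E n := E1 n ++ E2 n ++ E3 n.

Lemma sumn_pred m : (sumn [seq a.-1 | a <- iota 2 m]).*2 = m * m.+1.
Proof.
elim: m => // m IH.
rewrite (_ : iota 2 m.+1 = iota 2 m ++ [:: m.+2]); last first.
  by rewrite -(addn1 m) iotaD /=; congr (_ ++ [:: _]); lia.
rewrite map_cat sumn_cat /= doubleD IH; lia.
Qed.

Lemma sumn_const (T : Type) (c : nat) (s : seq T) : sumn [seq c | _ <- s] = c * size s.
Proof. by elim: s => /= [|x s ->]; lia. Qed.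

Lemma size_E n : (size (E n)).*2 = n.*2 + (n.-2 * n.-2).*2 + (n - 4) * (n - 3).
Proof.
rewrite /E /E1 /E2 /E3 !size_cat size_map size_iota !size_flatten /shape -!map_comp.
rewrite (eq_map (_ : _ =1 fun _ => n.-2)); last by move=> a /=; rewrite size_map size_iota.
rewrite sumn_const size_iota.
rewrite (eq_map (_ : _ =1 fun a => a.-1)); last by move=> a /=; rewrite size_map size_iota.
rewrite !doubleD sumn_pred.
case: (leqP 4 n) => h.
- rewrite (_ : (n - 4).+1 = n - 3); lia.
- rewrite (_ : n - 4 = 0); lia.
Qed.

Section Sep.
Variable n : nat.
Hypothesis hn : 3 <= n.

Lemma sep11 k k' : k < n -> k' < n -> mkseq (g1 n k) n = mkseq (g1 n k') n -> k = k'.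
Proof.
move=> hk hk' /mk_eq e; have := e k hk.
have := g1_spec hk k; have := g1_spec hk' k.
move: (g1 n k k) (g1 n k' k) => v1 v2 /= *; lia.
Qed.

Lemma sep12 k a k' : k < n -> 1 <= a <= n.-2 -> 2 <= k' <= n.-1 ->
  mkseq (g1 n k) n <> mkseq (g2 n a k') n.
Proof.
move=> hk ha hk' /mk_eq e; have := e 0 (ltac:(lia)).
have := g1_spec hk 0; have := g2_spec ha hk' 0.
move: (g1 n k 0) (g2 n a k' 0) => v1 v2 /= *; lia.
Qed.

Lemma sep13 k a k' : k < n -> 2 <= a <= n - 3 -> 1 <= k' <= a.-1 ->
  mkseq (g1 n k) n <> mkseq (g3 n a k') n.
Proof.
move=> hk ha hk' /mk_eq e; have := e 0 (ltac:(lia)).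
have := g1_spec hk 0; have := g3_spec ha hk' 0.
move: (g1 n k 0) (g3 n a k' 0) => v1 v2 /= *; lia.
Qed.

Lemma sep22 a k a' k' : 1 <= a <= n.-2 -> 2 <= k <= n.-1 -> 1 <= a' <= n.-2 -> 2 <= k' <= n.-1 ->
  mkseq (g2 n a k) n = mkseq (g2 n a' k') n -> a = a' /\ k = k'.
Proof.
move=> ha hk ha' hk' /mk_eq e; have := e 0 (ltac:(lia)); have := e k (ltac:(lia)).
have := g2_spec ha hk 0; have := g2_spec ha' hk' 0.
have := g2_spec ha hk k; have := g2_spec ha' hk' k.
move: (g2 n a k 0) (g2 n a' k' 0) (g2 n a k k) (g2 n a' k' k) => v1 v2 v3 v4 /= *; lia.
Qed.

Lemma sep23 a k a' k' : 1 <= a <= n.-2 -> 2 <= k <= n.-1 -> 2 <= a' <= n - 3 -> 1 <= k' <= a'.-1 ->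
  mkseq (g2 n a k) n <> mkseq (g3 n a' k') n.
Proof.
move=> ha hk ha' hk' /mk_eq e; have := e 0 (ltac:(lia)); have := e n.-1 (ltac:(lia)).
have := g2_spec ha hk 0; have := g3_spec ha' hk' 0.
have := g2_spec ha hk n.-1; have := g3_spec ha' hk' n.-1.
move: (g2 n a k 0) (g3 n a' k' 0) (g2 n a k n.-1) (g3 n a' k' n.-1) => v1 v2 v3 v4 /= *; lia.
Qed.

Lemma sep33 a k a' k' : 2 <= a <= n - 3 -> 1 <= k <= a.-1 -> 2 <= a' <= n - 3 -> 1 <= k' <= a'.-1 ->
  mkseq (g3 n a k) n = mkseq (g3 n a' k') n -> a = a' /\ k = k'.
Proof.
move=> ha hk ha' hk' /mk_eq e; have := e 0 (ltac:(lia)); have := e k.+1 (ltac:(lia)).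
have := g3_spec ha hk 0; have := g3_spec ha' hk' 0.
have := g3_spec ha hk k.+1; have := g3_spec ha' hk' k.+1.
move: (g3 n a k 0) (g3 n a' k' 0) (g3 n a k k.+1) (g3 n a' k' k.+1) => v1 v2 v3 v4 /= *; lia.
Qed.

Lemma uniq_E : uniq (E n).
Proof.
rewrite /E !cat_uniq; apply/and5P; split.
- rewrite /E1 map_inj_in_uniq ?iota_uniq // => k k'; rewrite !mem_iota => hk hk'.
  apply: sep11; lia.
- rewrite has_cat negb_or; apply/andP; split; apply/hasPn => x /flatten_mapP [a ha /mapP [k hk ->]];
    apply/negP => /mapP [k' hk' e]; move: ha hk hk'; rewrite !mem_iota => ha hk hk'.
  + by apply: (sep12 (k:=k') (a:=a) (k':=k)) => //; lia.
  + by apply: (sep13 (k:=k') (a:=a) (k':=k)) => //; lia.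
- apply: uniq_flatten_map; first exact: iota_uniq.
  + move=> a; rewrite mem_iota => ha; rewrite map_inj_in_uniq ?iota_uniq // => k k'.
    rewrite !mem_iota => hk hk' e.
    by have [] := @sep22 a k a k' ltac:(lia) ltac:(lia) ltac:(lia) ltac:(lia) e.
  + move=> a b x; rewrite !mem_iota => ha hb /mapP [k hk ->] /mapP [k' hk' e].
    move: hk hk'; rewrite !mem_iota => hk hk'.
    by have [] := @sep22 a k b k' ltac:(lia) ltac:(lia) ltac:(lia) ltac:(lia) e.
- apply/hasPn => x /flatten_mapP [a ha /mapP [k hk ->]];
    apply/negP => /flatten_mapP [a' ha' /mapP [k' hk' e]]; move: ha hk ha' hk'; rewrite !mem_iota => ha hk ha' hk'.
  by apply: (sep23 (a:=a') (k:=k') (a':=a) (k':=k)) => //; lia.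
- apply: uniq_flatten_map; first exact: iota_uniq.
  + move=> a; rewrite mem_iota => ha; rewrite map_inj_in_uniq ?iota_uniq // => k k'.
    rewrite !mem_iota => hk hk' e.
    by have [] := @sep33 a k a k' ltac:(lia) ltac:(lia) ltac:(lia) ltac:(lia) e.
  + move=> a b x; rewrite !mem_iota => ha hb /mapP [k hk ->] /mapP [k' hk' e].
    move: hk hk'; rewrite !mem_iota => hk hk'.
    by have [] := @sep33 a k b k' ltac:(lia) ltac:(lia) ltac:(lia) ltac:(lia) e.
Qed.
End Sep.

Definition No321 n (w : nat -> nat) := forall i j k, i < j -> j < k -> k < n -> w k < w j -> w j < w i -> False.
Definition No1324 n (w : nat -> nat) := forall i j k l, i < j -> j < k -> k < l -> l < n ->
  w i < w k -> w k < w j -> w j < w l -> False.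
Definition NoFish n (w : nat -> nat) := forall i j, i < j -> j < n -> i.+1 < n -> w j < w i -> w i < w i.+1 ->
  w i = (w j).+1 -> False.

Lemma transfer n (w g : nat -> nat) : (forall i, i < n -> w i = g i) ->
  No321 n g -> No1324 n g -> NoFish n g -> [/\ No321 n w, No1324 n w & NoFish n w].
Proof.
move=> e H3 H4 Hf; split.
- move=> i j k ij jk kn.
  rewrite (e i ltac:(lia)) (e j ltac:(lia)) (e k ltac:(lia)); exact: H3.
- move=> i j k l ij jk kl ln.
  rewrite (e i ltac:(lia)) (e j ltac:(lia)) (e k ltac:(lia)) (e l ltac:(lia)); exact: H4.
- move=> i j ij jn i1.
  rewrite (e i ltac:(lia)) (e j ltac:(lia)) (e i.+1 ltac:(lia)); exact: Hf.
Qed.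

Section Main.
Variable n : nat.
Hypothesis hn : 3 <= n.
Local Notation FF := (Fish n [:: [:: 3; 2; 1]; [:: 1; 3; 2; 4]]).

Lemma inF (s : 'S_n) : s \in FF <->
  [/\ No321 n (nth 0 (oneline s)), No1324 n (nth 0 (oneline s)) & NoFish n (nth 0 (oneline s))].
Proof.
rewrite /Fish inE /= andbT /avoids_pat; split.
- case/and3P => hf h3 h4; split.
  + move=> i j k ij jk kn a b; move/negP: h3; apply; apply/c321; exists i, j, k; by split.
  + move=> i j k l ij jk kl ln a b c; move/negP: h4; apply; apply/c1324; exists i, j, k, l; by split.
  + exact/cfish.
- case=> h3 h4 hf; apply/and3P; split.
  + exact/cfish.
  + by apply/negP => /c321 [i [j [k [ij jk kn a b]]]]; exact: (h3 i j k).
  + by apply/negP => /c1324 [i [j [k [l [ij jk kl ln [a b c]]]]]]; exact: (h4 i j k l).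
Qed.

Lemma oneline_inj : injective (@oneline n).
Proof.
move=> s t e; apply/permP => i; apply/val_inj => /=.
by rewrite -(wEo s i) -(wEo t i) e.
Qed.

Lemma oneline_mk (s : 'S_n) f : (forall i, i < n -> nth 0 (oneline s) i = f i) -> oneline s = mkseq f n.
Proof.
move=> e; apply: (@eq_from_nth _ 0); rewrite ?size_oneline ?size_mkseq // => i hi.
by rewrite nth_mkseq // e.
Qed.

Lemma build f : (forall i, i < n -> f i < n) -> (forall i j, i < n -> j < n -> f i = f j -> i = j) ->
  exists s : 'S_n, forall i, i < n -> nth 0 (oneline s) i = f i.
Proof.
move=> hR hI.
pose F := [ffun i : 'I_n => Ordinal (hR i (ltn_ord i))].
have Finj : injective F.
  move=> i j; rewrite !ffunE => /(congr1 val) /= e.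
  by apply/val_inj; exact: (hI _ _ (ltn_ord i) (ltn_ord j) e).
exists (perm Finj) => i hi.
by rewrite (wE _ hi) permE ffunE.
Qed.

Lemma card_FF : #|FF| = size (E n).
Proof.
rewrite cardE -(size_map (@oneline n)); apply: perm_size; apply: uniq_perm.
- by rewrite map_inj_uniq ?enum_uniq //; exact: oneline_inj.
- exact: uniq_E.
move=> x; apply/idP/idP.
- case/mapP => s; rewrite mem_enum => /inF [h3 h4 hf] ->.
  set w := nth 0 (oneline s).
  have Hr : forall i, i < n -> w i < n by move=> i hi; rewrite /w (wE _ hi) ltn_ord.
  have Hi : forall i j, i < n -> j < n -> w i = w j -> i = j.
    move=> i j hi hj; rewrite /w (wE _ hi) (wE _ hj) => /val_inj/perm_inj/(congr1 val) //.
  have Hs : forall v, v < n -> exists2 i, i < n & w i = v.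
    move=> v hv; exists (s^-1 (Ordinal hv))%g => //.
    by rewrite /w wEo permKV.
  rewrite /E !mem_cat.
  case: (zero_pos hn Hr Hi Hs h3 h4 hf) => hz.
  + have [k kn e] := caseA hn Hr Hi Hs h3 h4 hf hz.
    rewrite (oneline_mk e); apply/orP; left; apply/mapP; exists k => //.
    by rewrite mem_iota; lia.
  + case: (caseB hn Hr Hi Hs h3 h4 hf hz) => [e | [a [k [ha hk e]]] | [a [k [ha hk e]]]].
    * rewrite (oneline_mk e); apply/orP; left; apply/mapP; exists 0 => //.
      by rewrite mem_iota; lia.
    * rewrite (oneline_mk e); apply/orP; right; apply/orP; left.
      apply/flatten_mapP; exists a; first by rewrite mem_iota; lia.
      by apply/mapP; exists k => //; rewrite mem_iota; lia.
    * rewrite (oneline_mk e); apply/orP; right; apply/orP; right.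
      apply/flatten_mapP; exists a; first by rewrite mem_iota; lia.
      by apply/mapP; exists k => //; rewrite mem_iota; lia.
- rewrite /E !mem_cat => /or3P [].
  + case/mapP => k; rewrite mem_iota => hk ->.
    have hk' : k < n by lia.
    have [s hs] := build (g1_range hk') (g1_inj hk').
    apply/mapP; exists s; last by rewrite (oneline_mk hs).
    rewrite mem_enum; apply/inF; apply: (transfer hs).
    * exact: g1_321 hk'.
    * exact: g1_1324 hk'.
    * exact: g1_fish hk'.
  + case/flatten_mapP => a; rewrite mem_iota => ha /mapP [k]; rewrite mem_iota => hk ->.
    have ha' : 1 <= a <= n.-2 by lia.
    have hk' : 2 <= k <= n.-1 by lia.
    have [s hs] := build (g2_range ha' hk') (g2_inj ha' hk').
    apply/mapP; exists s; last by rewrite (oneline_mk hs).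
    rewrite mem_enum; apply/inF; apply: (transfer hs).
    * exact: g2_321 ha' hk'.
    * exact: g2_1324 ha' hk'.
    * exact: g2_fish ha' hk'.
  + case/flatten_mapP => a; rewrite mem_iota => ha /mapP [k]; rewrite mem_iota => hk ->.
    have ha' : 2 <= a <= n - 3 by lia.
    have hk' : 1 <= k <= a.-1 by lia.
    have [s hs] := build (g3_range ha' hk') (g3_inj ha' hk').
    apply/mapP; exists s; last by rewrite (oneline_mk hs).
    rewrite mem_enum; apply/inF; apply: (transfer hs).
    * exact: g3_321 ha' hk'.
    * exact: g3_1324 ha' hk'.
    * exact: g3_fish ha' hk'.
Qed.
End Main.

Unset Implicit Arguments.
Import GRing.Theory Num.Theory.
Local Open Scope ring_scope.

Theorem mainTheorem8 (n : nat) (hn : (3 <= n)%N) :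
  (#|Fish n [:: [:: 3; 2; 1]; [:: 1; 3; 2; 4]]%N|%:R : rat)
  = 3%:R / 2%:R * n%:R ^+ 2 - 13%:R / 2%:R * n%:R + 10%:R.
Proof.
have h := card_FF hn; have hs := size_E n.
move: h; set N := #|_| => h.
have key : (N.*2 + 13 * n = 3 * (n * n) + 20)%N.
  rewrite h hs.
  have [m ->] : exists m, n = (m + 3)%N by exists (n - 3)%N; lia.
  case: m => [|m] //=.
  rewrite (_ : (m.+1 + 3 - 4 = m)%N); last by lia.
  rewrite (_ : (m.+1 + 3 - 3 = m.+1)%N); last by lia.
  rewrite (_ : ((m.+1 + 3).-2 = m.+2)%N); last by lia.
  nia.
have kq : ((N.*2 + 13 * n)%:R : rat) = (3 * (n * n) + 20)%:R by rewrite key.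
rewrite -mul2n !natrD !natrM in kq.
rewrite expr2.
lra.
Qed.
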